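(* Let $u$ and $v$ be two prime words such that $u<_{lex}v$. Then $v=u^\alpha xy$ for some ordinal $\alpha$ and words $x,y$ such that $|x|\le|u|$ and $u<_{str}x$.
   Context: $A$ is a finite alphabet with a linear order $<_A$. Words are sequences of letters indexed by countable ordinals, $|x|$ is the length, $x^\alpha$ the concatenation of $\alpha$ copies of $x$. A suffix of $x$ is $x[\gamma,|x|)$, proper if $0<\gamma<|x|$. Write $x<_{str}x'$ if there are letters $a<_Ab$ and words $y,z,z'$ with $x=yaz$, $x'=ybz'$; $x\le_{lex}x'$ iff $x$ is a prefix of $x'$ or $x<_{str}x'$; $<_{lex}$ is its strict version. A word is primitive if $x=y^\alpha$ implies $\alpha=1$ and $y=x$; $w$ is prime if it is primitive and every proper suffix $z$ satisfies $w\le_{lex}z$. *)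

(* Defs.v *)
From HB Require Import structures.
From mathcomp Require Import all_boot all_order.
Set Implicit Arguments. Unset Strict Implicit. Unset Printing Implicit Defensive.
Import Order.TTheory.
Local Open Scope order_scope.

(* Validity (countable well-order) is a separate
   predicate.  Words are compared up to isomorphism ([weq]). *)
Record word (A : Type) := Word {
  pos : Type;
  wlt : pos -> pos -> Prop;
  lab : pos -> A }.

(* Countable ordinals, presented as countable well-ordered types. *)
Record cordinal := COrdinal {
  opos : Type;
  olt : opos -> opos -> Prop }.

Definition is_cwo (T : Type) (lt : T -> T -> Prop) : Prop :=
  (forall a, ~ lt a a) /\
  (forall a b c, lt a b -> lt b c -> lt a c) /\
  (forall a b, lt a b \/ a = b \/ lt b a) /\
  well_founded lt /\
  (exists f : T -> nat, injective f).

Definition valid_word A (w : word A) : Prop := is_cwo (@wlt A w).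
Definition valid_ord (al : cordinal) : Prop := is_cwo (@olt al).

Section Ops.
Variable A : Type.

Definition weq (x y : word A) : Prop :=
  exists f : pos x -> pos y, bijective f /\
    (forall a b, wlt a b <-> wlt (f a) (f b)) /\
    (forall a, lab (f a) = lab a).

Definition letter (a : A) : word A := @Word A unit (fun _ _ => False) (fun _ => a).

Definition concat (x y : word A) : word A :=
  @Word A (pos x + pos y)%type
    (fun p q => match p, q with
                | inl a, inl b => wlt a b
                | inr a, inr b => wlt a b
                | inl _, inr _ => True
                | inr _, inl _ => False end)
    (fun p => match p with inl a => lab a | inr b => lab b end).

(* x^alpha : concatenation of alpha copies of x (positions alpha x |x|,
   ordered lexicographically with the alpha-coordinate first) *)
Definition pow (x : word A) (al : cordinal) : word A :=
  @Word A (opos al * pos x)%type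
    (fun p q => olt p.1 q.1 \/ (p.1 = q.1 /\ wlt p.2 q.2))
    (fun p => lab p.2).

Definition suffix (x : word A) (g : pos x) : word A :=
  @Word A {q : pos x | ~ wlt q g}
    (fun p q => wlt (sval p) (sval q)) (fun p => lab (sval p)).

(* |x| <= |u| : x's positions embed as an initial segment of u's *)
Definition len_le (x u : word A) : Prop :=
  exists f : pos x -> pos u,
    (forall a b, wlt a b <-> wlt (f a) (f b)) /\
    (forall a c, wlt c (f a) -> exists b, f b = c).

Definition is_prefix (x x' : word A) : Prop :=
  exists z : word A, valid_word z /\ weq x' (concat x z).

Definition is_one (al : cordinal) : Prop := exists i : opos al, forall j, j = i.

Definition primitive (x : word A) : Prop :=
  forall (y : word A) (al : cordinal), valid_word y -> valid_ord al ->
    weq x (pow y al) -> is_one al /\ weq y x.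
End Ops.

Section Lex.
Variables (d : Order.disp_t) (A : finOrderType d).

Definition lt_str (x x' : word A) : Prop :=
  exists (y z z' : word A) (a b : A), a < b /\
    valid_word y /\ valid_word z /\ valid_word z' /\
    weq x (concat y (concat (letter a) z)) /\
    weq x' (concat y (concat (letter b) z')).

Definition le_lex (x x' : word A) : Prop := is_prefix x x' \/ lt_str x x'.
Definition lt_lex (x x' : word A) : Prop := le_lex x x' /\ ~ weq x x'.

(* prime: primitive and lexicographically <= every proper suffix;
   a proper suffix x[gamma,|x|) has 0 < gamma < |x|, i.e. gamma is a
   position of x which is not the least one *)
Definition prime_word (w : word A) : Prop :=
  valid_word w /\ primitive w /\
  forall g : pos w, (exists q, wlt q g) -> le_lex w (suffix g).
End Lex.

(* Main.v *)
From Stdlib Require Import ClassicalEpsilon Classical FunctionalExtensionality ProofIrrelevance Wellfounded.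
Require Import Defs.
From mathcomp Require Import all_boot all_order.
Set Implicit Arguments. Unset Strict Implicit. Unset Printing Implicit Defensive.

Lemma sig_eq (T : Type) (P : T -> Prop) (a b : sig P) : proj1_sig a = proj1_sig b -> a = b.
Proof. destruct a as [a ha], b as [b hb]; simpl; intros ->. f_equal; apply proof_irrelevance. Qed.

Lemma choice_fun (X Y : Type) (R : X -> Y -> Prop) :
  (forall x, exists y, R x y) -> exists f : X -> Y, forall x, R x (f x).
Proof.
intro H. exists (fun x => proj1_sig (constructive_indefinite_description _ (H x))).
intro x. exact (proj2_sig (constructive_indefinite_description _ (H x))).
Qed.

Lemma bij_of (X Y : Type) (f : X -> Y) :
  injective f -> (forall y, exists x, f x = y) -> bijective f.
Proof.
intros hi hs. destruct (choice_fun hs) as [g hg]. exists g.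
- intros x; apply hi; rewrite hg; reflexivity.
- intros y; apply hg.
Qed.

Lemma iff_inj (X Y : Type) (R : X -> X -> Prop) (S : Y -> Y -> Prop) (f : X -> Y) :
  (forall a b, R a b <-> S (f a) (f b)) ->
  (forall a b, R a b \/ a = b \/ R b a) -> (forall a, ~ R a a) -> injective f.
Proof.
intros hf ht hirr a b e. destruct (ht a b) as [h|[h|h]]; auto.
- apply hf in h; rewrite e in h; apply hf in h; now destruct (hirr _ h).
- apply hf in h; rewrite e in h; apply hf in h; now destruct (hirr _ h).
Qed.

Lemma wf_inv_sig (T : Type) (Q : T -> Prop) (R : T -> T -> Prop) :
  well_founded R -> well_founded (fun a b : sig Q => R (proj1_sig a) (proj1_sig b)).
Proof. intro w. apply (wf_inverse_image _ _ R (@proj1_sig T Q)). exact w. Qed.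

Lemma cwo_sig (T : Type) (Q : T -> Prop) (R : T -> T -> Prop) :
  is_cwo R -> is_cwo (fun a b : sig Q => R (proj1_sig a) (proj1_sig b)).
Proof.
intros [h1 [h2 [h3 [h4 [f hf]]]]]. split; [|split; [|split; [|split]]].
- intros a; apply h1.
- intros a b c; apply h2.
- intros a b; destruct (h3 (proj1_sig a) (proj1_sig b)) as [h|[h|h]]; auto.
  right; left; now apply sig_eq.
- now apply wf_inv_sig.
- exists (fun a => f (proj1_sig a)). intros a b e. apply sig_eq. now apply hf.
Qed.

Section Gen.
Variable A : Type.

Definition emp : word A := @Word A Empty_set (fun _ _ => False) (fun e => match e with end).

Lemma weq_refl (x : word A) : weq x x.
Proof. exists id; split; [exists id; done | split; done]. Qed.

Lemma weq_sym (x y : word A) : weq x y -> weq y x.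
Proof.
intros [f [[g c1 c2] [ho hl]]]. exists g. split; [exists f; done|split].
- intros a b. rewrite (ho (g a) (g b)) c2 c2. reflexivity.
- intros a. rewrite -(hl (g a)) c2. reflexivity.
Qed.

Lemma weq_trans (x y z : word A) : weq x y -> weq y z -> weq x z.
Proof.
intros [f [bf [ho hl]]] [f' [bf' [ho' hl']]]. exists (f' \o f). split; [by apply bij_comp|split].
- intros a b. rewrite (ho a b) (ho' (f a) (f b)). reflexivity.
- intros a. simpl. rewrite hl' hl. reflexivity.
Qed.

Definition summap (X Y X' Y' : Type) (f : X -> X') (g : Y -> Y') (p : X + Y) : X' + Y' :=
  match p with inl a => inl (f a) | inr b => inr (g b) end.

Lemma weq_concat (x x' y y' : word A) : weq x x' -> weq y y' -> weq (concat x y) (concat x' y').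
Proof.
intros [f [[fi c1 c2] [ho hl]]] [g [[gi d1 d2] [go gl]]].
exists (summap f g : pos (concat x y) -> pos (concat x' y')). split; [|split].
- exists (summap fi gi : pos (concat x' y') -> pos (concat x y)).
  + intros [a|a]; simpl; congr (_ _); auto.
  + intros [a|a]; simpl; congr (_ _); auto.
- intros [a|a] [b|b]; simpl; auto; tauto.
- intros [a|a]; simpl; auto.
Qed.

Lemma weq_assoc (x y z : word A) : weq (concat (concat x y) z) (concat x (concat y z)).
Proof.
pose f := (fun p : pos (concat (concat x y) z) => match p with
  | inl (inl a) => inl a | inl (inr b) => inr (inl b) | inr c => inr (inr c) end
  : pos (concat x (concat y z))).
pose g := (fun p : pos (concat x (concat y z)) => match p with
  | inl a => inl (inl a) | inr (inl b) => inl (inr b) | inr (inr c) => inr c end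
  : pos (concat (concat x y) z)).
exists f. split; [|split].
- exists g; [intros [[a|a]|a] | intros [a|[a|a]]]; reflexivity.
- intros [[a|a]|a] [[b|b]|b]; simpl; tauto.
- intros [[a|a]|a]; reflexivity.
Qed.

Lemma weq_emp_l (x e : word A) : (pos e -> False) -> weq x (concat e x).
Proof.
intros he. exists (fun a => inr a : pos (concat e x)). split; [|split].
- exists (fun p : pos (concat e x) => match p with inl a => match he a with end | inr b => b end).
  + intros a; reflexivity.
  + intros [a|a]; [destruct (he a)|reflexivity].
- intros a b; simpl; tauto.
- intros a; reflexivity.
Qed.

Lemma weq_emp_r (x e : word A) : (pos e -> False) -> weq x (concat x e).
Proof.
intros he. exists (fun a => inl a : pos (concat x e)). split; [|split].
- exists (fun p : pos (concat x e) => match p with inr a => match he a with end | inl b => b end).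
  + intros a; reflexivity.
  + intros [a|a]; [reflexivity|destruct (he a)].
- intros a b; simpl; tauto.
- intros a; reflexivity.
Qed.

Lemma valid_emp : valid_word emp.
Proof.
split; [|split; [|split; [|split]]].
- intros [].
- intros [].
- intros [].
- intros a; constructor; intros [].
- exists (fun _ => 0); intros [].
Qed.

Lemma valid_letter (a : A) : valid_word (letter a).
Proof.
split; [|split; [|split; [|split]]].
- intros _ [].
- intros _ _ _ [].
- intros [] []; auto.
- intros x; constructor; intros _ [].
- exists (fun _ => 0); intros [] [] _; reflexivity.
Qed.

Lemma valid_concat (x y : word A) : valid_word x -> valid_word y -> valid_word (concat x y).
Proof.
intros [h1 [h2 [h3 [h4 [f hf]]]]] [k1 [k2 [k3 [k4 [g hg]]]]].
split; [|split; [|split; [|split]]].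
- intros [a|a]; simpl; auto.
- intros [a|a] [b|b] [c|c]; simpl; eauto; tauto.
- intros [a|a] [b|b]; simpl; auto.
  + destruct (h3 a b) as [h|[h|h]]; subst; auto.
  + destruct (k3 a b) as [h|[h|h]]; subst; auto.
- assert (HL : forall a, Acc (@wlt A (concat x y)) (inl a)).
  { intros a; induction (h4 a) as [a _ IH]; constructor; intros [b|b] H; simpl in H;
      [apply IH; exact H| contradiction]. }
  intros [a|a]; auto. induction (k4 a) as [a _ IH]; constructor; intros [b|b] H; simpl in H; auto.
- exists (fun p : pos (concat x y) => pickle (match p with inl a => inl (f a) | inr b => inr (g b) end : nat + nat)).
  intros [a|a] [b|b] e; apply (pcan_inj pickleK) in e; inversion e; congr (_ _); auto.
Qed.

Definition subw (x : word A) (Q : pos x -> Prop) : word A :=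
  @Word A (sig Q) (fun p q => wlt (proj1_sig p) (proj1_sig q)) (fun p => lab (proj1_sig p)).

Lemma valid_subw (x : word A) Q : valid_word x -> valid_word (@subw x Q).
Proof. intro h. apply (cwo_sig Q h). Qed.

End Gen.
Section IE.
Variable A : Type.
Variable u : word A.

Definition IE (X : word A) (g : pos u -> pos X) : Prop :=
  (forall i j, wlt i j <-> wlt (g i) (g j)) /\ (forall i, lab (g i) = lab i) /\
  (forall p i, wlt p (g i) -> exists j, g j = p).

Lemma IE_weq (X Y : word A) (g : pos u -> pos X) : IE g -> weq X Y -> exists g', @IE Y g'.
Proof.
intros [h1 [h2 h3]] [f [[fi c1 c2] [ho hl]]]. exists (fun i => f (g i)). split; [|split].
- intros i j. rewrite h1 ho. reflexivity.
- intros i. rewrite hl h2. reflexivity.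
- intros p i H. rewrite -(c2 p) -ho in H. destruct (h3 _ _ H) as [j hj].
  exists j. rewrite hj c2. reflexivity.
Qed.

Lemma IE_inl (X Z : word A) (g : pos u -> pos X) : @IE X g -> @IE (concat X Z) (fun i => inl (g i)).
Proof.
intros [h1 [h2 h3]]. split; [|split].
- intros i j; simpl; apply h1.
- intros i; simpl; apply h2.
- intros [p|p] i H; simpl in H; [|contradiction].
  destruct (h3 _ _ H) as [j hj]. exists j. rewrite hj. reflexivity.
Qed.

Lemma IE_proj (X Z : word A) (g : pos u -> pos (concat X Z)) : @IE (concat X Z) g -> (forall i, exists q, g i = inl q) ->
  exists g1, @IE X g1.
Proof.
intros [h1 [h2 h3]] hq. destruct (choice_fun hq) as [g1 hg1]. exists g1. split; [|split].
- intros i j. rewrite h1 !hg1. reflexivity.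
- intros i. rewrite -h2 hg1. reflexivity.
- intros p i H. destruct (h3 (inl p) i) as [j hj]. { rewrite hg1. exact H. }
  exists j. rewrite hg1 in hj. injection hj. auto.
Qed.

Lemma IE_id : @IE u id.
Proof. split; [|split]; try done. intros p i _; exists p; reflexivity. Qed.

End IE.
Section Key.
Variables (d : Order.disp_t) (A : finOrderType d).

Lemma key_x (u y z : word A) (a b : A) (g : pos u -> pos (concat y (concat (letter a) z))) (iq : pos u) :
  valid_word u -> valid_word y -> (a < b)%O -> IE g -> g iq = inr (inl tt) ->
  len_le (concat y (letter b)) u /\ lt_str u (concat y (letter b)).
Proof.
intros Hu Hy Hab [h1 [h2 h3]] giq.
have Hu' := Hu. destruct Hu' as [u1 [u2 [u3 [u4 _]]]].
have ginj : injective g.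
{ intros i j e. destruct (u3 i j) as [h|[h|h]]; auto.
  - apply h1 in h. rewrite e in h. apply h1 in h. now destruct (u1 _ h).
  - apply h1 in h. rewrite e in h. apply h1 in h. now destruct (u1 _ h). }
have ky : forall q, exists j, g j = inl q.
{ intros q. apply (h3 _ iq). rewrite giq. simpl. exact I. }
destruct (choice_fun ky) as [k hk].
have kiq : forall q, wlt (k q) iq.
{ intros q. apply h1. rewrite hk giq. exact I. }
have below_iq : forall c, wlt c iq -> exists q, k q = c.
{ intros c H. apply h1 in H. rewrite giq in H.
  destruct (g c) as [q|[[]|w]] eqn:E; simpl in H; try contradiction.
  exists q. apply ginj. rewrite hk E. reflexivity. }
split.
- exists (fun p : pos (concat y (letter b)) => match p with inl q => k q | inr _ => iq end).
  split.
  + intros [q|[]] [q'|[]]; simpl.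
    * rewrite h1 !hk. simpl. tauto.
    * split; intros _; [apply kiq|exact I].
    * split; [intros []| intros H; destruct (u1 iq); eapply u2; [exact H| apply kiq]].
    * split; [intros []| intros H; now destruct (u1 _ H)].
  + intros [q|[]] c H; simpl in H.
    * apply h1 in H. rewrite hk in H. destruct (g c) as [q'|w] eqn:E; simpl in H; [|contradiction].
      exists (inl q'). simpl. apply ginj. rewrite hk E. reflexivity.
    * destruct (below_iq c H) as [q hq]; exists (inl q); exact hq.
- exists y, (subw (fun i : pos u => wlt iq i)), (emp A), a, b.
  split; [exact Hab|split; [exact Hy|split; [apply valid_subw, Hu|split; [apply valid_emp|split]]]].
  + apply weq_sym.
    pose Psi := (fun p : pos (concat y (concat (letter a) (subw (fun i : pos u => wlt iq i)))) =>
      match p with inl q => k q | inr (inl _) => iq | inr (inr w) => proj1_sig w end).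
    have Hiff : forall p p', wlt p p' <-> wlt (Psi p) (Psi p').
    { intros [q|[[]|w]] [q'|[[]|w']]; simpl.
      - rewrite h1 !hk. simpl. tauto.
      - split; intros _; [apply kiq|exact I].
      - split; intros _; [eapply u2; [apply kiq|exact (proj2_sig w')]|exact I].
      - split; [intros []| intros H; destruct (u1 iq); eapply u2; [exact H| apply kiq]].
      - split; [intros []| apply u1].
      - split; intros _; [exact (proj2_sig w')|exact I].
      - split; [intros []| intros H; destruct (u1 iq); eapply u2; [exact (proj2_sig w)|eapply u2; [exact H|apply kiq]]].
      - split; [intros []| intros H; destruct (u1 iq); eapply u2; [exact (proj2_sig w)|exact H]].
      - reflexivity. }
    exists Psi. split; [|split].
    * apply bij_of.
      -- have V : valid_word (concat y (concat (letter a) (subw (fun i : pos u => wlt iq i)))).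
            { apply valid_concat; [exact Hy|apply valid_concat; [apply valid_letter|apply valid_subw, Hu]]. }
            destruct V as [v1 [_ [v3 _]]]; exact (iff_inj Hiff v3 v1).
      -- intros i. destruct (u3 i iq) as [h|[h|h]].
         ++ destruct (below_iq i h) as [q hq]. exists (inl q). exact hq.
         ++ exists (inr (inl tt)). simpl; auto.
         ++ exists (inr (inr (exist _ i h))). reflexivity.
    * exact Hiff.
    * intros [q|[[]|w]]; simpl.
      -- rewrite -h2 hk. reflexivity.
      -- rewrite -h2 giq. reflexivity.
      -- reflexivity.
  + apply weq_concat; [apply weq_refl | apply weq_emp_r; intros []].
Qed.
End Key.
Lemma wf_min (X : Type) (R : X -> X -> Prop) (Q : X -> Prop) :
  well_founded R -> forall x, Q x -> exists m, Q m /\ forall y, R y m -> ~ Q y.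
Proof.
intros w x qx. apply NNPP; intro H.
assert (forall y, ~ Q y). { intro y. induction (w y) as [y _ IH]. intro qy. apply H. exists y. split; auto. }
now apply (H0 x).
Qed.

Section Main.
Variables (d : Order.disp_t) (A : finOrderType d) (u v : word A).
Hypothesis Hu : valid_word u.
Hypothesis Hv : valid_word v.
Hypothesis Hprim : primitive v.
Hypothesis Hsuf : forall g : pos v, (exists q, wlt q g) -> le_lex v (Defs.suffix g).
Hypothesis Hne : ~ weq u v.
Variable e0 : pos u -> pos v.
Hypothesis He0 : IE e0.
Variable i0 : pos u.

Definition vwf : well_founded (@wlt A v) := proj1 (proj2 (proj2 (proj2 Hv))).
Local Unset Implicit Arguments.
Let v1 : forall a : pos v, ~ wlt a a := proj1 Hv.
Let v2 : forall a b c : pos v, wlt a b -> wlt b c -> wlt a c := proj1 (proj2 Hv).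
Let v3 : forall a b : pos v, wlt a b \/ a = b \/ wlt b a := proj1 (proj2 (proj2 Hv)).
Let u1 : forall a : pos u, ~ wlt a a := proj1 Hu.
Let u3 : forall a b : pos u, wlt a b \/ a = b \/ wlt b a := proj1 (proj2 (proj2 Hu)).
Let u4 : well_founded (@wlt A u) := proj1 (proj2 (proj2 (proj2 Hu))).

Local Set Implicit Arguments.
Definition Emb (t : pos v) (e : pos u -> pos v) : Prop :=
  (forall i j, wlt i j <-> wlt (e i) (e j)) /\ (forall i, lab (e i) = lab i) /\
  (forall i, ~ wlt (e i) t) /\ (forall p i, ~ wlt p t -> wlt p (e i) -> exists j, e j = p) /\
  (exists i, e i = t).
Definition T t := exists e, Emb t e.
Definition E t : pos u -> pos v := epsilon (inhabits (fun _ => t)) (Emb t).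
Lemma E_spec t : T t -> Emb t (E t).
Proof. intro h. exact (epsilon_spec _ _ h). Qed.

Definition InWin s p := exists i, E s i = p.

Definition F (t : pos v) (rec : forall s, wlt s t -> Prop) : Prop :=
  T t /\ (forall p, wlt p t -> exists s (h : wlt s t), rec s h /\ InWin s p) /\
  ~ (exists s (h : wlt s t), rec s h /\ InWin s t).
Definition Bs := Fix vwf (fun _ => Prop) F.

Lemma Bs_eq t : Bs t = @F t (fun s _ => Bs s).
Proof.
unfold Bs. apply (Fix_eq vwf (fun _ => Prop) F). intros x f g H. have -> : f = g.
{ apply functional_extensionality_dep; intro y; apply functional_extensionality_dep; intro hy; apply H. }
reflexivity.
Qed.

Lemma Bs_iff t : Bs t <-> T t /\ (forall p, wlt p t -> exists s, wlt s t /\ Bs s /\ InWin s p) /\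
  ~ (exists s, wlt s t /\ Bs s /\ InWin s t).
Proof.
rewrite Bs_eq. unfold F. split.
- intros [h1 [h2 h3]]. split; [exact h1|split].
  + intros p hp. destruct (h2 p hp) as [s [hs [b w]]]. exists s; auto.
  + intros [s [hs [b w]]]. apply h3. exists s, hs; auto.
- intros [h1 [h2 h3]]. split; [exact h1|split].
  + intros p hp. destruct (h2 p hp) as [s [hs [b w]]]. exists s, hs; auto.
  + intros [s [hs [b w]]]. apply h3. exists s; auto.
Qed.

Lemma Bs_T s : Bs s -> T s.
Proof. intro h. apply Bs_iff in h. apply h. Qed.

Lemma Emb_uniq t e e' : Emb t e -> Emb t e' -> forall i, e i = e' i.
Proof.
intros [a1 [a2 [a3 [a4 a5]]]] [b1 [b2 [b3 [b4 b5]]]] i.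
induction (u4 i) as [i _ IH].
destruct (v3 (e i) (e' i)) as [h|[h|h]]; auto.
- destruct (b4 _ _ (a3 i) h) as [j hj]. have hji : wlt j i by apply b1; rewrite hj.
  rewrite -IH in hj; auto. apply a1 in hji. rewrite hj in hji. now destruct (v1 _ hji).
- destruct (a4 _ _ (b3 i) h) as [j hj]. have hji : wlt j i by apply a1; rewrite hj.
  rewrite IH in hj; auto. apply b1 in hji. rewrite hj in hji. now destruct (v1 _ hji).
Qed.

Lemma win_ge s p : Bs s -> InWin s p -> ~ wlt p s.
Proof. intros b [i <-]. apply (E_spec (Bs_T b)). Qed.

Lemma win_init s p q : Bs s -> ~ wlt q s -> wlt q p -> InWin s p -> InWin s q.
Proof. intros b h1 h2 [i <-]. apply ((proj1 (proj2 (proj2 (proj2 (E_spec (Bs_T b))))))) with i; auto. Qed.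

Lemma win_self s : Bs s -> InWin s s.
Proof. intros b. apply (E_spec (Bs_T b)). Qed.

Lemma win_below s s' q : Bs s -> Bs s' -> wlt s s' -> InWin s q -> wlt q s'.
Proof.
intros b b' hs w.
have H3 := proj2 (proj2 (proj1 (Bs_iff s') b')).
destruct (v3 q s') as [h|[h|h]]; auto.
- subst. destruct H3. exists s; auto.
- destruct H3. exists s; split; [exact hs|split; [exact b|]].
  apply (@win_init s q s' b); auto.
  intro h'. apply (v1 s). eauto.
Qed.

Lemma win_uniq s s' q : Bs s -> Bs s' -> InWin s q -> InWin s' q -> s = s'.
Proof.
intros b b' w w'. destruct (v3 s s') as [h|[h|h]]; auto.
- destruct (win_ge b' w'). exact (win_below b b' h w).
- destruct (win_ge b w). exact (win_below b' b h w').
Qed.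

Lemma E_inj s : Bs s -> injective (E s).
Proof. intro b. exact (iff_inj (proj1 (E_spec (Bs_T b))) u3 u1). Qed.

Definition Cov p := exists s, Bs s /\ InWin s p.

Lemma Cov_down p p' : Cov p -> wlt p' p -> Cov p'.
Proof.
intros [s [b w]] h. destruct (v3 p' s) as [h'|[h'|h']].
- destruct (proj1 (proj2 (proj1 (Bs_iff s) b)) p' h') as [s' [_ [b' w']]]. exists s'; auto.
- subst. exists s. split; auto. apply win_self; auto.
- exists s. split; auto. apply (@win_init s p p' b); auto.
  intro h2. apply (v1 s). eauto.
Qed.

Definition alpha : cordinal := @COrdinal (sig Bs) (fun a b => wlt (proj1_sig a) (proj1_sig b)).

Lemma valid_alpha : valid_ord alpha.
Proof. exact (cwo_sig Bs Hv). Qed.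

Lemma pow_iff (a b : sig Bs) i j :
  (wlt (proj1_sig a) (proj1_sig b) \/ (a = b /\ wlt i j)) <-> wlt (E (proj1_sig a) i) (E (proj1_sig b) j).
Proof.
destruct a as [a ha], b as [b hb]; simpl. split.
- intros [h|[h h']].
  + have h1 := win_below ha hb h (ex_intro _ i erefl).
    have h2 := win_ge hb (ex_intro _ j erefl).
    destruct (v3 b (E b j)) as [h3|[h3|h3]]; [eauto| rewrite -h3; exact h1| contradiction].
  + injection h as ->. apply (E_spec (Bs_T hb)). exact h'.
- intros H. destruct (v3 a b) as [h|[h|h]]; auto.
  + subst. right. split; [apply sig_eq; reflexivity|]. apply (E_spec (Bs_T hb)). exact H.
  + have h1 := win_below hb ha h (ex_intro _ j erefl).
    destruct (win_ge ha (ex_intro _ i erefl)). eauto.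
Qed.

Lemma caseA : (forall p, Cov p) -> False.
Proof.
intros hc. apply Hne.
pose f := (fun p : pos (pow u alpha) => E (proj1_sig p.1) p.2).
have W : weq (pow u alpha) v.
{ exists f. split; [|split].
  - apply bij_of.
    + intros [a i] [b j] e. simpl in e. unfold f in e; simpl in e.
      have hab : a = b.
      { apply sig_eq. apply (win_uniq (proj2_sig a) (proj2_sig b) (ex_intro _ i e) (ex_intro _ j erefl)). }
      subst. congr (_, _). exact (E_inj (proj2_sig b) e).
    + intros p. destruct (hc p) as [s [b [i hi]]]. exists (exist _ s b, i). exact hi.
  - intros [a i] [b j]. simpl. unfold f; simpl. apply pow_iff.
  - intros [a i]. unfold f; simpl. apply (E_spec (Bs_T (proj2_sig a))). }
apply weq_sym in W.
destruct (Hprim Hu valid_alpha W) as [_ H]. exact H.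
Qed.

Lemma IE_suffix_T m (h : pos u -> pos (Defs.suffix m)) : IE h -> T m.
Proof.
intros [h1 [h2 h3]]. exists (fun i => proj1_sig (h i)). split; [|split; [|split; [|split]]].
- intros i j. apply h1.
- intros i. rewrite -h2. reflexivity.
- intros i. exact (proj2_sig (h i)).
- intros p i hp H. destruct (h3 (exist (fun q => ~ wlt q m) p hp : pos (Defs.suffix m)) i H) as [j hj].
  exists j. rewrite hj. reflexivity.
- destruct (v3 (proj1_sig (h i0)) m) as [H|[H|H]].
  + destruct (proj2_sig (h i0) H).
  + exists i0; exact H.
  + destruct (h3 (exist (fun q => ~ wlt q m) m (v1 m) : pos (Defs.suffix m)) i0 H) as [j hj].
    exists j. rewrite hj. reflexivity.
Qed.

Lemma caseB_decomp m : (forall p, Cov p <-> wlt p m) -> weq v (concat (pow u alpha) (Defs.suffix m)).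
Proof.
intros hm. apply weq_sym.
pose f := (fun p : pos (concat (pow u alpha) (Defs.suffix m)) => match p with
   | inl q => E (proj1_sig q.1) q.2 | inr w => proj1_sig w end).
have covE : forall (a : sig Bs) i, wlt (E (proj1_sig a) i) m.
{ intros a i. apply hm. exists (proj1_sig a). split; [exact (proj2_sig a)| exists i; reflexivity]. }
exists f. split; [|split].
- apply bij_of.
  + intros [[a i]|w] [[b j]|w'] e; simpl in e.
    * have hab : a = b.
      { apply sig_eq; apply (win_uniq (proj2_sig a) (proj2_sig b) (ex_intro _ i e) (ex_intro _ j erefl)). }
      subst. f_equal. f_equal. exact (E_inj (proj2_sig b) e).
    * destruct (proj2_sig w'). rewrite -e. apply covE.
    * destruct (proj2_sig w). rewrite e. apply covE.
    * f_equal. apply sig_eq. exact e.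
  + intros p. destruct (classic (wlt p m)) as [H|H].
    * destruct (proj2 (hm p) H) as [s [b [i hi]]]. exists (inl (exist _ s b, i)). exact hi.
    * exists (inr (exist (fun q => ~ wlt q m) p H)). reflexivity.
- intros [[a i]|w] [[b j]|w']; simpl.
  + apply pow_iff.
  + split; intros _; [|exact I]. have h1 := covE a i. have h2 := proj2_sig w'.
    destruct (v3 (proj1_sig w') m) as [h|[h|h]]; [contradiction| rewrite h; exact h1| eauto].
  + split; [intros []|intros H]. destruct (proj2_sig w). eauto.
  + reflexivity.
- intros [[a i]|w]; simpl; [apply (E_spec (Bs_T (proj2_sig a)))|reflexivity].
Qed.

Lemma caseB m : ~ Cov m -> (forall p, wlt p m -> Cov p) ->
  exists (al : cordinal) (x y : word A),
    valid_ord al /\ valid_word x /\ valid_word y /\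
    weq v (concat (pow u al) (concat x y)) /\ len_le x u /\ lt_str u x.
Proof.
intros hm hlt.
have hcov : forall p, Cov p <-> wlt p m.
{ intros p; split.
  - intros c. destruct (v3 p m) as [h|[h|h]]; auto; [subst; contradiction| destruct hm; exact (Cov_down c h)].
  - apply hlt. }
have Tm : T m -> False.
{ intros tm.
  have bm : Bs m.
  { apply Bs_iff. split; [exact tm|split].
    - intros p hp. destruct (hlt p hp) as [s [b w]]. exists s. split; [|auto].
      have := win_ge b w. destruct (v3 s p) as [h|[h|h]]; [eauto| subst; auto| contradiction].
    - intros [s [_ [b w]]]. apply hm. exists s; auto. }
  apply hm. exists m. split; [exact bm| apply win_self; exact bm]. }
destruct (@wf_min _ _ (fun _ => True) vwf (e0 i0) I) as [p0 [_ hp0]].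
have hp0' : forall q, ~ wlt q p0 by intros q h; exact (hp0 q h I).
have Tp0 : T p0.
{ destruct He0 as [h1 [h2 h3]]. exists e0. split; [exact h1|split; [exact h2|split; [intros i; apply hp0'|split]]].
  - intros p i _ H. exact (h3 p i H).
  - destruct (v3 p0 (e0 i0)) as [h|[h|h]]; [exact (h3 _ _ h)| exists i0; auto| destruct (hp0' _ h)]. }
have p0m : wlt p0 m.
{ destruct (v3 p0 m) as [h|[h|h]]; auto; [subst; destruct (Tm Tp0)| destruct (hp0' _ h)]. }
destruct (@Hsuf m (ex_intro _ p0 p0m)) as [Hp|Hs].
- destruct Hp as [z [_ W]]. exfalso. apply Tm.
  destruct (IE_weq (IE_inl z He0) (weq_sym W)) as [h Hh]. exact (IE_suffix_T Hh).
- destruct Hs as [y [z [z' [a [b [Hab [Vy [Vz [Vz' [W1 W2]]]]]]]]]].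
  destruct (IE_weq He0 W1) as [g Hg].
  destruct (classic (forall i, exists q, g i = inl q)) as [Hall|Hex].
  + exfalso. apply Tm. destruct (IE_proj Hg Hall) as [g1 Hg1].
    destruct (IE_weq (IE_inl (concat (letter b) z') Hg1) (weq_sym W2)) as [h Hh]. exact (IE_suffix_T Hh).
  + apply not_all_ex_not in Hex. destruct Hex as [i Hi].
    have [iq Hiq] : exists iq, g iq = inr (inl tt).
    { destruct (g i) as [q|[[]|w]] eqn:Eg.
      - destruct Hi. exists q; reflexivity.
      - exists i; exact Eg.
      - destruct Hg as [_ [_ h3]]. apply (h3 _ i). rewrite Eg. exact I. }
    destruct (key_x Hu Vy Hab Hg Hiq) as [HL HS].
    exists alpha, (concat y (letter b)), z'.
    split; [exact valid_alpha|split; [apply valid_concat; [exact Vy|apply valid_letter]|split; [exact Vz'|split; [|split; [exact HL|exact HS]]]]].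
    eapply weq_trans; [exact (caseB_decomp hcov)|].
    apply weq_concat; [apply weq_refl|]. eapply weq_trans; [exact W2|]. apply weq_sym, weq_assoc.
Qed.

Lemma main_prefix : exists (al : cordinal) (x y : word A),
    valid_ord al /\ valid_word x /\ valid_word y /\
    weq v (concat (pow u al) (concat x y)) /\ len_le x u /\ lt_str u x.
Proof.
destruct (classic (forall p, Cov p)) as [H|H]; [destruct (caseA H)|].
apply not_all_ex_not in H. destruct H as [p hp].
destruct (@wf_min _ _ (fun p => ~ Cov p) vwf p hp) as [m [hm hmin]].
apply (caseB hm). intros q hq. apply NNPP. exact (hmin q hq).
Qed.

End Main.
Section Final.
Variables (d : Order.disp_t) (A : finOrderType d).

Definition two : cordinal := @COrdinal bool (fun a b => a = false /\ b = true).
Lemma valid_two : valid_ord two.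
Proof.
split; [|split; [|split; [|split]]].
- intros a [h1 h2]; congruence.
- intros a b c [h1 h2] [h3 h4]; congruence.
- intros [] []; simpl; auto.
- have Af : Acc (@olt two) false by constructor; intros y [_ h]; discriminate.
  intros []; [constructor; intros y [h _]; subst; exact Af | exact Af].
- exists nat_of_bool. intros [] []; done.
Qed.

Definition zero : cordinal := @COrdinal Empty_set (fun _ _ => False).
Lemma valid_zero : valid_ord zero.
Proof.
split; [|split; [|split; [|split]]].
- intros [].
- intros [].
- intros [].
- intros a; constructor; intros [].
- exists (fun _ => 0); intros [].
Qed.

Lemma nonempty (u : word A) : valid_word u -> primitive u -> exists i : pos u, True.
Proof.
intros Hu Hp. apply NNPP; intro H.
have H' : pos u -> False by intro i; apply H; exists i.
have W : weq u (pow u two).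
{ exists (fun i => (false, i) : pos (pow u two)). split; [|split].
  - exists (fun p : pos (pow u two) => p.2).
    + intros i; reflexivity.
    + intros p; destruct (H' p.2).
  - intros a; destruct (H' a).
  - intros a; reflexivity. }
destruct (Hp u two Hu valid_two W) as [[i hi] _].
destruct i; [have h := hi false | have h := hi true]; discriminate h.
Qed.

End Final.

Theorem mainTheorem9 (d : Order.disp_t) (A : finOrderType d) (u v : word A) :
  prime_word u -> prime_word v -> lt_lex u v ->
  exists (al : cordinal) (x y : word A),
    valid_ord al /\ valid_word x /\ valid_word y /\
    weq v (concat (pow u al) (concat x y)) /\
    len_le x u /\ lt_str u x.
Proof.
intros [Hu [Hpu Hsu]] [Hv [Hpv Hsv]] [[Hpre|Hstr] Hne].
- destruct Hpre as [z [_ W]].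
  destruct (IE_weq (IE_inl z (IE_id u)) (weq_sym W)) as [e0 He0].
  destruct (nonempty Hu Hpu) as [i0 _].
  exact (main_prefix Hu Hv Hpv Hsv Hne He0 i0).
- destruct Hstr as [y [z [z' [a [b [Hab [Vy [Vz [Vz' [W1 W2]]]]]]]]]].
  destruct W1 as [f [[fi c1 c2] [ho hl]]].
  have Hf : IE f.
  { split; [exact ho|split; [exact hl|]]. intros p i _; exists (fi p); apply c2. }
  destruct (key_x Hu Vy Hab Hf (c2 (inr (inl tt)))) as [HL HS].
  exists zero, (concat y (letter b)), z'.
  split; [exact valid_zero|split; [apply valid_concat; [exact Vy|apply valid_letter]|split; [exact Vz'|split; [|split; [exact HL|exact HS]]]]].
  eapply weq_trans; [exact W2|]. eapply weq_trans; [apply weq_sym, weq_assoc|].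
  apply weq_emp_l. intros [[] _].
Qed.
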